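(* The tag–options lattice $TO$ (defined below) is a complete lattice.
   Context: $T$ is a set of tags and $O$ a set of options. The tag lattice is the dual of the powerset lattice of $T$: its elements are subsets of $T$, ordered by $A \sqsubseteq B$ iff $A \supseteq B$, with meet given by union and join by intersection. For $T' \subseteq T$, the options lattice $O_{T'}$ consists of all functions $f : T' \to \mathcal{P}(O)$, ordered pointwise by inclusion, with meet the pointwise intersection and join the pointwise union. For $A,B \subseteq T$, define $\phi_{A\to B} : O_A \to O_B$ by $\phi_{A\to B}(f)(t) = f(t)$ if $t\in A\cap B$ and $=O$ if $t\in B\setminus A$. The tag–options lattice $TO$ has elements the pairs $(T', f)$ with $T' \subseteq T$ and $f \in O_{T'}$, ordered by $(A,f) \sqsubseteq (B,g)$ iff $A \supseteq B$ and $\phi_{A\to B}(f) \sqsubseteq g$ in $O_B$. For $\Lambda \subseteq TO$ with $V = \{T' \mid (T',f)\in\Lambda\}$, the join is $(\bigcap V, \bigvee\{\phi_{T'\to \bigcap V}(f) \mid (T',f)\in\Lambda\})$ and the meet is $(\bigcup V, \bigwedge\{\phi_{T'\to\bigcup V}(f) \mid (T',f)\in\Lambda\})$, where $\bigvee,\bigwedge$ denote join and meet in the corresponding options lattice. *)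

(* Defs.v *)
Set Implicit Arguments.

Definition pset (X : Type) := X -> Prop.

Definition opts (T O : Type) (A : pset T) := {t : T | A t} -> pset O.

Definition opts_le (T O : Type) (A : pset T) (f g : opts O A) : Prop :=
  forall (t : {t : T | A t}) (o : O), f t o -> g t o.

(* phi_{A -> B}(f)(t) = f(t) if t in A /\ B, and = O if t in B \ A.
   Written as: o ∈ phi(f)(t)  iff  (for every proof that t ∈ A, o ∈ f(t)). *)
Definition phi (T O : Type) (A B : pset T) (f : opts O A) : opts O B :=
  fun tB o => forall hA : A (proj1_sig tB), f (exist _ (proj1_sig tB) hA) o.

Record TO (T O : Type) := mkTO { tags : pset T; topts : opts O tags }.

Definition TO_le (T O : Type) (x y : TO T O) : Prop :=
  (forall t, tags y t -> tags x t) /\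
  opts_le (phi (tags y) (topts x)) (topts y).

Definition is_upper_bound (X : Type) (le : X -> X -> Prop) (L : pset X) (s : X) :=
  forall x, L x -> le x s.
Definition is_lower_bound (X : Type) (le : X -> X -> Prop) (L : pset X) (s : X) :=
  forall x, L x -> le s x.

Definition is_complete_lattice (X : Type) (le : X -> X -> Prop) : Prop :=
  (forall x, le x x) /\
  (forall x y, le x y -> le y x -> x = y) /\
  (forall x y z, le x y -> le y z -> le x z) /\
  (forall L : pset X,
     (exists s, is_upper_bound le L s /\
                forall u, is_upper_bound le L u -> le s u) /\
     (exists i, is_lower_bound le L i /\
                forall l, is_lower_bound le L l -> le l i)).

(* Main.v *)
Require Import Defs.
From Stdlib Require Import FunctionalExtensionality PropExtensionality ProofIrrelevance.

Theorem theorem6 (T O : Type) : is_complete_lattice (@TO_le T O).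
Proof.
  split; [|split; [|split]].
  - intros [A f]; split; simpl; [auto|].
    intros [t h] o H; exact (H h).
  - intros [A f] [B g] [H1 H2] [H3 H4]; simpl in *.
    assert (E : A = B).
    { apply functional_extensionality; intro t; apply propositional_extensionality; split; auto. }
    subst B. f_equal.
    apply functional_extensionality; intros [t h].
    apply functional_extensionality; intro o.
    apply propositional_extensionality; split; intro K.
    + apply H2; intro h'; rewrite (proof_irrelevance _ h' h); exact K.
    + apply H4; intro h'; rewrite (proof_irrelevance _ h' h); exact K.
  - intros [A f] [B g] [C k] [H1 H2] [H3 H4]; simpl in *; split; simpl; [auto|].
    unfold opts_le; intros [t hc] o K; simpl in *.
    apply H4; intro hb. apply (H2 (exist _ t hb)). exact K.
  - intro L; split.
    + exists (@mkTO T O (fun t => forall x, L x -> tags x t)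
        (fun th o => exists x, L x /\ forall hx : tags x (proj1_sig th),
             topts x (exist _ (proj1_sig th) hx) o)).
      split.
      * intros x Lx; split; simpl; [auto|].
        unfold opts_le; intros [t h] o K; simpl in *. exists x; split; auto.
      * intros u Hu; split; simpl.
        -- intros t ht x Lx; apply (proj1 (Hu x Lx)); exact ht.
        -- unfold opts_le; intros [t hu] o K; simpl in *.
           assert (hs : forall x, L x -> tags x t)
             by (intros x Lx; apply (proj1 (Hu x Lx)); exact hu).
           destruct (K hs) as [x [Lx Kx]].
           apply (proj2 (Hu x Lx) (exist _ t hu)); exact Kx.
    + exists (@mkTO T O (fun t => exists x, L x /\ tags x t)
        (fun th o => forall x, L x -> forall hx : tags x (proj1_sig th),
             topts x (exist _ (proj1_sig th) hx) o)).
      split.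
      * intros x Lx; split; simpl; [eauto|].
        unfold opts_le; intros [t h] o K; simpl in *. apply (K (ex_intro _ x (conj Lx h))); auto.
      * intros l Hl; split; simpl.
        -- intros t [x [Lx hx]]; apply (proj1 (Hl x Lx)); exact hx.
        -- unfold opts_le; intros [t hi] o K x Lx hx; simpl in *.
           apply (proj2 (Hl x Lx) (exist _ t hx)); exact K.
Qed.
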